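(* Let $n$ be odd and let $S$ be a semiregular subgroup of $G^*$. Then there exists $\varphi\in G^*\setminus G$ of order $2$ such that $\varphi s=s\varphi$ for every $s\in S$.
   Context: Fix $n\ge 2$, $W=\{1,\dots,n\}$, $M=\{n+1,\dots,2n\}$, $I=W\cup M$. $G^*=\{\varphi\in\mathrm{Sym}(I):\{\varphi(W),\varphi(M)\}=\{W,M\}\}$ and $G=\{\varphi\in\mathrm{Sym}(I):\varphi(W)=W,\ \varphi(M)=M\}$. A subgroup $S\le\mathrm{Sym}(I)$ is semiregular if for every $z\in I$ the only element $s\in S$ with $s(z)=z$ is the identity. *)

(* Defs.v *)
From mathcomp Require Import all_boot all_order all_fingroup.
Set Implicit Arguments. Unset Strict Implicit. Unset Printing Implicit Defensive.
Local Open Scope group_scope.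

(* I = {1,...,2n} is modelled by 'I_(n + n), element i standing for i+1.
   W = {1..n} ~ {i | i < n},  M = {n+1..2n} ~ {i | n <= i}. *)
Definition Wset (n : nat) : {set 'I_(n + n)} := [set i : 'I_(n + n) | i < n]%N.
Definition Mset (n : nat) : {set 'I_(n + n)} := [set i : 'I_(n + n) | n <= i]%N.

Definition Gstar (n : nat) : {set {perm 'I_(n + n)}} :=
  [set phi : {perm 'I_(n + n)} |
     [set phi @: Wset n; phi @: Mset n] == [set Wset n; Mset n]].

Definition Gfix (n : nat) : {set {perm 'I_(n + n)}} :=
  [set phi : {perm 'I_(n + n)} |
     (phi @: Wset n == Wset n) && (phi @: Mset n == Mset n)].

Definition semiregular (n : nat) (S : {group {perm 'I_(n + n)}}) : Prop :=
  forall (z : 'I_(n + n)) (s : {perm 'I_(n + n)}), s \in S -> s z = z -> s = 1.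

(* Main.v *)
Require Import Defs.
From mathcomp Require Import all_boot all_order all_fingroup.
From mathcomp Require Import cyclic pgroup sylow.
Set Implicit Arguments. Unset Strict Implicit. Unset Printing Implicit Defensive.
Local Open Scope group_scope.

Section Gen.
Definition sreg (T : finType) (S : {set {perm T}}) :=
  forall (z : T) (s : {perm T}), s \in S -> s z = z -> s = 1.
Definition orb (T : finType) (S : {set {perm T}}) (a : T) : {set T} :=
  (fun s : {perm T} => s a) @: S.
Definition sel (T : finType) (S : {set {perm T}}) (a x : T) : {perm T} :=
  odflt 1 [pick s in S | s a == x].
Definition loc (T : finType) (S : {set {perm T}}) (a b x : T) : T :=
  if x \in orb S a then sel S a x b else sel S b x a.
Definition invs (T : finType) (S : {set {perm T}}) (A : {set T}) :=
  forall s x, s \in S -> x \in A -> s x \in A.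

Lemma selP (T : finType) (S : {set {perm T}}) a x :
  x \in orb S a -> sel S a x \in S /\ sel S a x a = x.
Proof.
rewrite /sel; case: pickP => [s /andP [Hs /eqP]| H] //.
case/imsetP=> s Hs E; have := H s; rewrite Hs E eqxx //.
Qed.

Lemma sreg_uniq (T : finType) (S : {group {perm T}}) a s t :
  sreg S -> s \in S -> t \in S -> s a = t a -> s = t.
Proof.
move=> H Hs Ht E; apply/eqP; rewrite eq_mulgV1; apply/eqP.
apply: (H a); first by rewrite groupM ?groupV.
by rewrite permM E permK.
Qed.

Lemma orb_act (T : finType) (S : {group {perm T}}) a s x :
  s \in S -> (s x \in orb S a) = (x \in orb S a).
Proof.
move=> Hs; apply/imsetP/imsetP => [[u Hu E]|[u Hu E]].
  exists (u * s^-1); first by rewrite groupM ?groupV.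
  by rewrite permM -E permK.
exists (u * s); first by rewrite groupM.
by rewrite permM E.
Qed.

Lemma orb_f (T : finType) (S : {group {perm T}}) a s :
  s \in S -> s a \in orb S a.
Proof. by move=> Hs; apply/imsetP; exists s. Qed.

Lemma orb_refl (T : finType) (S : {group {perm T}}) a : a \in orb S a.
Proof. by have := orb_f a (group1 S); rewrite perm1. Qed.

Lemma sel_eq (T : finType) (S : {group {perm T}}) a s :
  sreg S -> s \in S -> sel S a (s a) = s.
Proof.
move=> H Hs; have [H1 H2] := selP (orb_f a Hs).
exact: (sreg_uniq H H1 Hs H2).
Qed.

Lemma card_orb (T : finType) (S : {group {perm T}}) a :
  sreg S -> #|orb S a| = #|S|.
Proof.
move=> H; apply: card_in_imset => s t Hs Ht E; exact: (sreg_uniq H Hs Ht E).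
Qed.

Lemma orb_sub (T : finType) (S : {group {perm T}}) a A :
  invs S A -> a \in A -> orb S a \subset A.
Proof. by move=> IA Ha; apply/subsetP => x /imsetP [s Hs ->]; apply: IA. Qed.

Lemma loc_a (T : finType) (S : {group {perm T}}) a b s :
  sreg S -> s \in S -> loc S a b (s a) = s b.
Proof. by move=> H Hs; rewrite /loc orb_f // sel_eq. Qed.

Lemma loc_b (T : finType) (S : {group {perm T}}) a b s :
  sreg S -> s \in S ->
  (orb S a :&: orb S b = set0 \/ exists g, [/\ g \in S, g * g = 1 & b = g a]) ->
  loc S a b (s b) = s a.
Proof.
move=> H Hs [D|[g [Hg Hgg ->]]].
  rewrite /loc; case: ifP => [Hin|_]; last by rewrite sel_eq.
  have : s b \in orb S a :&: orb S b by rewrite inE Hin orb_f.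
  by rewrite D inE.
have -> : s (g a) = (g * s) a by rewrite permM.
rewrite loc_a ?groupM // permM -[g (g a)]permM Hgg perm1 //.
Qed.

Lemma build (T : finType) (S : {group {perm T}}) (Q : T -> T -> bool)
  (Good : {set T} -> Prop) :
  sreg S ->
  (forall s x y, s \in S -> Q x y -> Q (s x) (s y)) ->
  (forall x y, Q x y -> Q y x) ->
  (forall A, Good A -> invs S A -> A != set0 -> exists a b,
     [/\ a \in A, b \in A, Q a b,
       (orb S a :&: orb S b = set0 \/ exists g, [/\ g \in S, g * g = 1 & b = g a]) &
       Good (A :\: (orb S a :|: orb S b))]) ->
  forall A, Good A -> invs S A -> exists phi : T -> T,
    [/\ forall x, x \in A -> [/\ phi x \in A, phi (phi x) = x & Q x (phi x)],
        forall x, x \notin A -> phi x = x &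
        forall s x, s \in S -> x \in A -> phi (s x) = s (phi x)].
Proof.
move=> Hreg Qs Qsym step A.
have [k Hk] : exists k, #|A| <= k by exists #|A|.
elim: k A Hk => [|k IH] A HA GA IA.
  exists id; split => // x; move: HA; rewrite leqn0 cards_eq0 => /eqP -> ;
  by rewrite inE.
case: (boolP (A == set0)) => [/eqP A0|An0].
  by exists id; split => // x; rewrite A0 inE.
have [a [b [Ha Hb Qab Hd G']]] := step A GA IA An0.
set O := orb S a :|: orb S b.
have OA : O \subset A by rewrite subUset !orb_sub.
have aO : a \in O by rewrite inE orb_refl.
have IA' : invs S (A :\: O).
  move=> s x Hs; rewrite /O !inE !orb_act // => /andP [-> Hx].
  by rewrite IA.
have HA' : #|A :\: O| <= k.
  rewrite -ltnS; apply: leq_trans HA; rewrite (cardsD1 a A) Ha add1n ltnS.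
  by apply: subset_leq_card; rewrite setDS // sub1set.
have [phi' [P1 P2 P3]] := IH _ HA' G' IA'.
have Ocase : forall x, x \in O -> exists2 s, s \in S & (x = s a \/ x = s b).
  move=> x; rewrite inE => /orP [] /imsetP [s Hs ->]; exists s; auto.
have locO : forall x, x \in O -> [/\ loc S a b x \in O, loc S a b (loc S a b x) = x,
    Q x (loc S a b x) & forall s, s \in S -> loc S a b (s x) = s (loc S a b x)].
  move=> x /Ocase [s Hs [->|->]].
    rewrite !loc_a // loc_b //; split => //.
    - by rewrite inE orb_f ?orbT.
    - by apply: Qs.
    - by move=> u Hu; rewrite -permM !loc_a ?groupM // permM.
  rewrite !loc_b // loc_a //; split => //.
  - by rewrite inE orb_f.
  - by apply: Qs => //; apply: Qsym.
  - by move=> u Hu; rewrite -permM !loc_b ?groupM // permM.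
exists (fun x => if x \in O then loc S a b x else phi' x); split.
- move=> x Hx; case: (boolP (x \in O)) => HxO.
    have [L1 L2 L3 _] := locO x HxO.
    by rewrite L1 L2; split => //; apply: (subsetP OA).
  have HxA' : x \in A :\: O by rewrite inE HxO.
  have [Q1 Q2 Q3] := P1 x HxA'.
  move: (Q1); rewrite inE => /andP [/negbTE -> Hy]; split => //.
- move=> x Hx; have HxO : x \notin O by apply: contra Hx; apply: (subsetP OA).
  by rewrite (negbTE HxO) P2 // inE negb_and Hx orbT.
- move=> s x Hs Hx; have HsO : (s x \in O) = (x \in O) by rewrite /O !inE !orb_act.
  rewrite HsO; case: ifP => HxO; first by have [_ _ _ ->] := locO x HxO.
  by rewrite P3 // inE HxO.
Qed.
End Gen.

Definition pres n (s : {perm 'I_(n + n)}) := forall x, (s x \in Wset n) = (x \in Wset n).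
Definition swp n (s : {perm 'I_(n + n)}) := forall x, (s x \in Wset n) = ~~ (x \in Wset n).

Lemma memW n (i : 'I_(n + n)) : (i \in Wset n) = (i < n)%N.
Proof. by rewrite inE. Qed.
Lemma memM n (i : 'I_(n + n)) : (i \in Mset n) = ~~ (i \in Wset n).
Proof. by rewrite !inE -leqNgt. Qed.

Lemma memIm (T : finType) (s : {perm T}) (A : {set T}) y :
  (y \in s @: A) = (s^-1 y \in A).
Proof. by rewrite -{1}(permKV s y) mem_imset //; apply: perm_inj. Qed.

Lemma swp_im n (s : {perm 'I_(n + n)}) : swp s -> s @: Wset n = Mset n /\ s @: Mset n = Wset n.
Proof.
move=> H; split; apply/setP => y; rewrite memIm ?memM;
  have := H (s^-1 y); rewrite permKV => ->; by case: (_ \in _).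
Qed.

Lemma pres_im n (s : {perm 'I_(n + n)}) : pres s -> s @: Wset n = Wset n /\ s @: Mset n = Mset n.
Proof.
move=> H; split; apply/setP => y; rewrite memIm ?memM;
  have := H (s^-1 y); rewrite permKV => ->; by case: (_ \in _).
Qed.

Lemma im_pres n (s : {perm 'I_(n + n)}) : s @: Wset n = Wset n -> pres s.
Proof. by move=> E x; rewrite -{1}E memIm permK. Qed.

Lemma im_swp n (s : {perm 'I_(n + n)}) : s @: Wset n = Mset n -> swp s.
Proof. by move=> E x; have := mem_imset (Wset n) x (@perm_inj _ s); rewrite E memM => <-; rewrite negbK. Qed.

Lemma Gfix_pres n (s : {perm 'I_(n + n)}) : s \in Gfix n -> pres s.
Proof. by rewrite inE => /andP [/eqP E _]; apply: im_pres. Qed.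

Lemma Gstar_swp n (s : {perm 'I_(n + n)}) : s \in Gstar n -> s \notin Gfix n -> swp s.
Proof.
rewrite inE => /eqP E Hf.
have : s @: Wset n \in [set Wset n; Mset n] by rewrite -E set21.
case/set2P => Hs; last by apply: im_swp.
have [_ H2] := pres_im (im_pres Hs).
by move: Hf; rewrite inE Hs H2 !eqxx.
Qed.

Lemma Gstar_cases n (s : {perm 'I_(n + n)}) : s \in Gstar n -> pres s \/ swp s.
Proof.
move=> H; case: (boolP (s \in Gfix n)) => Hf.
  by left; apply: Gfix_pres. 
by right; apply: Gstar_swp.
Qed.

Lemma W_neq_M n : (0 < n)%N -> Wset n != Mset n.
Proof.
move=> Hn; have h : (0 < n + n)%N by rewrite addn_gt0 Hn.
apply/eqP => E; have := memM (Ordinal h); rewrite -E memW /= Hn //.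
Qed.

Lemma swp_Gstar n (s : {perm 'I_(n + n)}) : (0 < n)%N -> swp s -> s \in Gstar n :\: Gfix n.
Proof.
move=> Hn H; have [E1 E2] := swp_im H.
rewrite !inE E1 E2 setUC eqxx andbT /= eq_sym.
by rewrite (negbTE (W_neq_M Hn)).
Qed.

Lemma card_W n : #|Wset n| = n.
Proof.
have -> : Wset n = [set lshift n i | i : 'I_n].
  apply/setP => x; rewrite memW; apply/idP/imsetP => [Hx|[i _ ->]].
    by exists (Ordinal Hx) => //; apply: val_inj.
  by rewrite /= ltn_ord.
by rewrite card_imset ?card_ord //; apply: lshift_inj.
Qed.

Lemma card_notW n : #|~: Wset n| = n.
Proof.
by have := cardsC (Wset n); rewrite card_W card_ord => /eqP; rewrite eqn_add2l => /eqP.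
Qed.

Lemma presX n (s : {perm 'I_(n + n)}) k : pres s -> pres (s ^+ k).
Proof.
move=> H; elim: k => [|k IH] x; first by rewrite expg0 perm1.
by rewrite expgS permM IH H.
Qed.

Lemma swpX n (s : {perm 'I_(n + n)}) k : swp s -> forall x, ((s ^+ k) x \in Wset n) = odd k (+) (x \in Wset n).
Proof.
move=> H; elim: k => [|k IH] x; first by rewrite expg0 perm1.
by rewrite expgS permM IH H /=; case: (odd k); case: (_ \in _).
Qed.

Lemma parity n (S : {group {perm 'I_(n + n)}}) g :
  semiregular S -> g \in S -> #[g] = 2 -> pres g -> ~~ odd n.
Proof.
move=> Hreg Hg Hord Hp.
have p2 : 2.-group <[g]>.
  by rewrite /pgroup -/(#[g]) Hord.
have act : [acts <[g]>, on Wset n | 'P].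
  rewrite cycle_subG; apply/astabsP => x. exact: Hp.
have := pgroup_fix_mod p2 act.
have -> : 'Fix_(Wset n | 'P)(<[g]>) = set0.
  apply/setP => x; rewrite !inE; apply/negP => /andP [_ /subsetP Hx].
  have := Hx g (cycle_id g); rewrite inE /= => /eqP /(Hreg _ _ Hg) E.
  by move: Hord; rewrite E order1.
by rewrite cards0 card_W modn2 mod0n; case: (odd n).
Qed.

Lemma oddord n (S : {group {perm 'I_(n + n)}}) h :
  odd n -> semiregular S -> h \in S -> pres h -> odd #[h].
Proof.
move=> On Hreg Hh Hp; apply/negPn/negP => Ev.
have [k Em] : exists k, #[h] = (k * 2)%N.
  by exists (#[h])./2; rewrite -{1}(odd_double_half #[h]) (negbTE Ev) add0n -muln2.
have m2 : (0 < k)%N.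
  by move: (order_gt0 h); rewrite Em; case: k {Em}.
have Ho : #[h ^+ k] = 2.
  rewrite orderXdiv Em ?mulKn //; apply: dvdn_mulr; apply: dvdnn.
have := parity Hreg (groupX _ Hh) Ho (presX _ Hp).
by rewrite On.
Qed.

Lemma sreg_of n (S : {group {perm 'I_(n + n)}}) : semiregular S -> sreg S.
Proof. by []. Qed.

Lemma finish n (S : {group {perm 'I_(n + n)}}) (phi : 'I_(n + n) -> 'I_(n + n)) :
  (0 < n)%N ->
  (forall x, phi (phi x) = x) ->
  (forall x, (x \in Wset n) != (phi x \in Wset n)) ->
  (forall s x, s \in S -> phi (s x) = s (phi x)) ->
  exists p : {perm 'I_(n + n)},
    [/\ p \in Gstar n :\: Gfix n, #[p] = 2%N &
        forall s, s \in S -> p * s = s * p].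
Proof.
move=> Hn K Q E.
have inj : injective phi by apply: (can_inj K).
have sw : swp (perm inj).
  by move=> x; rewrite permE; have := Q x; case: (_ \in _); case: (_ \in _).
exists (perm inj); split.
- exact: swp_Gstar.
- have n1 : perm inj != 1.
    apply/eqP => E1; have h : (0 < n + n)%N by rewrite addn_gt0 Hn.
    by have := sw (Ordinal h); rewrite E1 perm1; case: (_ \in _).
  have d2 : (#[perm inj] %| 2)%N.
    by rewrite order_dvdn expg2; apply/eqP/permP => x; rewrite permM !permE K ?perm1.
  have := dvdn_leq (isT : (0 < 2)%N) d2.
  have := order_gt0 (perm inj).
  move: n1; rewrite -order_eq1.
  by case: #[_] => [|[|[|]]].
- by move=> s Hs; apply/permP => x; rewrite !permM !permE E.
Qed.

Theorem theorem11 (n : nat) (S : {group {perm 'I_(n + n)}}) :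
  (2 <= n)%N -> odd n ->
  S \subset Gstar n -> semiregular S ->
  exists phi : {perm 'I_(n + n)},
    [/\ phi \in Gstar n :\: Gfix n, #[phi] = 2%N &
        forall s, s \in S -> phi * s = s * phi].
Proof.
move=> n2 On SG Hreg.
have n0 : (0 < n)%N by apply: leq_trans n2.
have Hr := sreg_of Hreg.
set Q := fun x y : 'I_(n + n) => (x \in Wset n) != (y \in Wset n).
have Qs : forall s x y, s \in S -> Q x y -> Q (s x) (s y).
  move=> s x y Hs; rewrite /Q.
  case: (Gstar_cases (subsetP SG s Hs)) => H; rewrite !H //.
  by case: (_ \in _); case: (_ \in _).
have Qsym : forall x y, Q x y -> Q y x by move=> x y; rewrite /Q eq_sym.
have invT : invs S setT by move=> *; rewrite inE.
suff [phi [P1 _ P3]] : exists phi : 'I_(n + n) -> 'I_(n + n),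
    [/\ forall x, x \in setT -> [/\ phi x \in setT, phi (phi x) = x & Q x (phi x)],
        forall x, x \notin setT -> phi x = x &
        forall s x, s \in S -> x \in setT -> phi (s x) = s (phi x)].
  apply: (finish (S := S) (phi := phi) n0).
  - by move=> x; have [] := P1 x (in_setT x).
  - by move=> x; have [] := P1 x (in_setT x).
  - by move=> s x Hs; apply: P3 => //; rewrite inE.
case: (boolP [forall s in S, s \in Gfix n]) => [/forall_inP Hall|].
  have Hp : forall s, s \in S -> pres s by move=> s /Hall /Gfix_pres.
  apply: (build (Good := fun A => #|A :&: Wset n| = #|A :\: Wset n|)) => //;
    last by rewrite setTI setTD card_W card_notW.
  move=> A GA IA An0.
  have HAW := cardsID (Wset n) A.
  have A0 : (0 < #|A|)%N by rewrite card_gt0.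
  have [a Ha] : exists a, a \in A :&: Wset n.
    by apply/set0Pn; rewrite -card_gt0; move: A0; rewrite -HAW GA addnn double_gt0.
  have [b Hb] : exists b, b \in A :\: Wset n.
    by apply/set0Pn; rewrite -card_gt0; move: A0; rewrite -HAW -GA addnn double_gt0.
  move: (Ha) (Hb); rewrite inE => /andP [aA aW]; rewrite inE => /andP [bW bA].
  have oa : forall x, x \in orb S a -> x \in A :&: Wset n.
    by move=> x /imsetP [s Hs ->]; rewrite inE IA //= Hp //.
  have ob : forall x, x \in orb S b -> x \in A :\: Wset n.
    by move=> x /imsetP [s Hs ->]; rewrite inE IA // Hp // bW.
  exists a; exists b; split => //.
  - by rewrite /Q aW.
  - left; apply/setP => x; rewrite inE [x \in set0]inE; apply/negP => /andP [/oa h1 /ob h2].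
    by move: h1 h2; rewrite !inE => /andP [_ ->] /andP [].
  have E1 : (A :\: (orb S a :|: orb S b)) :&: Wset n = (A :&: Wset n) :\: orb S a.
    apply/setP => x.
    have h1 : (x \in orb S a) ==> (x \in A :&: Wset n) by apply/implyP/oa.
    have h2 : (x \in orb S b) ==> (x \in A :\: Wset n) by apply/implyP/ob.
    move: h1 h2; rewrite !inE.
    by case: (x \in orb S a); case: (x \in orb S b); case: (x \in A); case: (x < n)%N.
  have E2 : (A :\: (orb S a :|: orb S b)) :\: Wset n = (A :\: Wset n) :\: orb S b.
    apply/setP => x.
    have h1 : (x \in orb S a) ==> (x \in A :&: Wset n) by apply/implyP/oa.
    have h2 : (x \in orb S b) ==> (x \in A :\: Wset n) by apply/implyP/ob.
    move: h1 h2; rewrite !inE.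
    by case: (x \in orb S a); case: (x \in orb S b); case: (x \in A); case: (x < n)%N.
  have sa : orb S a \subset A :&: Wset n by apply/subsetP => x /oa.
  have sb : orb S b \subset A :\: Wset n by apply/subsetP => x /ob.
  rewrite E1 E2 (cardsD (A :&: Wset n)) (cardsD (A :\: Wset n)).
  by rewrite (setIidPr sa) (setIidPr sb) !card_orb // GA.
rewrite negb_forall_in => /existsP [t /andP [Ht Htf]].
have swt := Gstar_swp (subsetP SG t Ht) Htf.
have Ph : pres (t * t) by move=> x; rewrite permM !swt negbK.
have Oq := oddord On Hreg (groupM Ht Ht) Ph.
set q := #[t * t] in Oq.
have Hg : t ^+ q \in S by rewrite groupX.
have gg : t ^+ q * t ^+ q = 1.
  by rewrite -expgMn ?expg_order //; apply: commute_refl.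
have swg : forall x, Q x ((t ^+ q) x).
  by move=> x; rewrite /Q (swpX q swt) Oq; case: (_ \in _).
apply: (build (Good := fun _ => True)) => // A _ IA An0.
have [a Ha] := set0Pn _ An0.
exists a, ((t ^+ q) a); split => //; first by apply: IA.
by right; exists (t ^+ q).
Qed.
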